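(* Let $X$ be a locally convex space, let $T:X\rightrightarrows X^{*}$, and let $V\subset X$ with $V\cap D(T)\neq\emptyset$. The following are equivalent: (i) $T$ is $V$-representable; (ii) $T|_{V}\in\mathcal{M}(X)$ and $[\psi_{T|_{V}}=c]\cap(V\times X^{*})\subset T|_{V}$; (iii) $T|_{V}\in\mathcal{M}(X)$ and $[\psi_{T|_{V}}=c]\cap(V\times X^{*})=T|_{V}$; (iv) $\psi_{T|_{V}}$ is a $V$-representative of $T|_{V}$.
   Context: $(X,\tau)$ is a non-trivial Hausdorff locally convex space, $X^*$ its dual with weak-star topology $\omega^*$, $Z=X\times X^*$ with topology $\tau\times\omega^*$, $c(x,x^* )=\langle x,x^*\rangle$. Operators are identified with their graphs; $D(T)$ is the domain; $T|_V$ has graph $\operatorname{Graph}T\cap(V\times X^* )$. $\psi_T$ is the $\tau\times\omega^*$-lsc convex hull of $c+\iota_{\operatorname{Graph}T}$ (the greatest $\tau\times\omega^*$-lsc convex function majorized by it). $[f=g]=\{z\mid f(z)=g(z)\}$. $\mathcal M(X)$: monotone operators with non-empty graph. $\mathscr R$: proper convex $\tau\times\omega^*$-lsc $h:Z\to\overline{\mathbb R}$ with $h\ge c$. $T$ is $V$-representable if $V\cap D(T)\neq\emptyset$ and there is $h\in\mathscr R$ (a $V$-representative of $T$) with $[h=c]\cap(V\times X^* )=\operatorname{Graph}(T|_V)$. *)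

(* Defs.v *)
From HB Require Import structures.
From mathcomp Require Import all_boot all_order all_algebra.
From mathcomp Require Import all_classical all_reals all_analysis.
Set Implicit Arguments. Unset Strict Implicit. Unset Printing Implicit Defensive.
Import Order.TTheory GRing.Theory Num.Theory numFieldTopology.Exports.
Local Open Scope classical_set_scope.
Local Open Scope ring_scope.

Section Defs.
Variables (R : realType) (X : tvsType R).

Record dual := Dual {
  dfun :> X -> R;
  dfun_linear : forall (a : R) (x y : X), dfun (a *: x + y) = a * dfun x + dfun y;
  dfun_cont : continuous dfun }.

Definition coupling (z : X * dual) : R := z.2 z.1.

(* open sets of Z for the product topology tau x weak-star *)
Definition Zopen (U : set (X * dual)) : Prop :=
  forall z, U z -> exists A : set X, [/\ open A, A z.1 &
    exists (n : nat) (w : 'I_n -> X) (e : R), 0 < e /\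
      forall (y : X) (psi : dual), A y ->
        (forall i, `|psi (w i) - z.2 (w i)| < e) -> U (y, psi)].

Definition Zlsc (h : X * dual -> \bar R) : Prop :=
  forall r : R, Zopen [set z | (r%:E < h z)%E].

Definition Zcomb (t : R) (z1 z2 z3 : X * dual) : Prop :=
  z3.1 = t *: z1.1 + (1 - t) *: z2.1 /\
  forall y, z3.2 y = t * z1.2 y + (1 - t) * z2.2 y.

(* convexity of an extended-real function (convex epigraph) *)
Definition Zconvex (h : X * dual -> \bar R) : Prop :=
  forall (t : R) (z1 z2 z3 : X * dual) (a1 a2 : R), 0 <= t <= 1 ->
    Zcomb t z1 z2 z3 -> (h z1 <= a1%:E)%E -> (h z2 <= a2%:E)%E ->
    (h z3 <= (t * a1 + (1 - t) * a2)%:E)%E.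

Definition Zproper (h : X * dual -> \bar R) : Prop :=
  (forall z, h z != -oo%E) /\ exists z, h z != +oo%E.

Definition reprClass (h : X * dual -> \bar R) : Prop :=
  [/\ Zproper h, Zconvex h, Zlsc h & forall z, ((coupling z)%:E <= h z)%E].

Definition lsc_conv_hull (f : X * dual -> \bar R) : X * dual -> \bar R :=
  fun z => ereal_sup [set g z | g in
     [set g | Zconvex g /\ Zlsc g /\ forall z', (g z' <= f z')%E]].

(* operators are identified with their graphs *)
Definition dom (T : set (X * dual)) : set X := [set x | exists phi, T (x, phi)].
Definition restr (T : set (X * dual)) (V : set X) : set (X * dual) :=
  [set z | T z /\ V z.1].

Definition c_plus_ind (T : set (X * dual)) (z : X * dual) : \bar R :=
  if z \in T then (coupling z)%:E else +oo%E.

Definition psiT (T : set (X * dual)) := lsc_conv_hull (c_plus_ind T).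

Definition monotone_op (T : set (X * dual)) : Prop :=
  forall x y (phi psi : dual), T (x, phi) -> T (y, psi) ->
    0 <= phi (x - y) - psi (x - y).

Definition in_M (T : set (X * dual)) : Prop := monotone_op T /\ T !=set0.

Definition eq_c_on (h : X * dual -> \bar R) (V : set X) : set (X * dual) :=
  [set z | h z = (coupling z)%:E /\ V z.1].

Definition V_representative (V : set X) (T : set (X * dual)) h : Prop :=
  reprClass h /\ eq_c_on h V = restr T V.

Definition V_representable (V : set X) (T : set (X * dual)) : Prop :=
  (V `&` dom T !=set0) /\ exists h, V_representative V T h.

End Defs.

(* Main.v *)
Require Import Defs.
From HB Require Import structures.
From mathcomp Require Import all_boot all_order all_algebra.
From mathcomp Require Import all_classical all_reals all_analysis.
From mathcomp Require Import lra ring.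
Import Order.TTheory GRing.Theory Num.Theory numFieldTopology.Exports.
Set Implicit Arguments. Unset Strict Implicit.
Local Open Scope classical_set_scope.
Local Open Scope ring_scope.

Section Aux.
Variables (R : realType) (X : tvsType R).
Implicit Types (phi : dual X) (S : set (X * dual X)).

Lemma d0 phi : phi 0 = 0.
Proof.
have := dfun_linear phi 1 0 0; rewrite scale1r addr0 mul1r => h; lra.
Qed.
Lemma dD phi x y : phi (x + y) = phi x + phi y.
Proof. by have := dfun_linear phi 1 x y; rewrite scale1r mul1r. Qed.
Lemma dZ phi a x : phi (a *: x) = a * phi x.
Proof. by have := dfun_linear phi a x 0; rewrite addr0 d0 addr0. Qed.
Lemma dB phi x y : phi (x - y) = phi x - phi y.
Proof. by rewrite dD -scaleN1r dZ mulN1r. Qed.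

Lemma dN phi x : phi (- x) = - phi x.
Proof. by rewrite -scaleN1r dZ mulN1r. Qed.

Definition mixf (t : R) phi1 phi2 (y : X) := t * phi1 y + (1 - t) * phi2 y.
Lemma mix_lin t phi1 phi2 (a : R) (x y : X) :
  mixf t phi1 phi2 (a *: x + y) = a * mixf t phi1 phi2 x + mixf t phi1 phi2 y.
Proof. rewrite /mixf !dD !dZ; ring. Qed.
Lemma mix_cont t phi1 phi2 : continuous (mixf t phi1 phi2).
Proof.
move=> x; rewrite /mixf.
have h1 := (@dfun_cont _ _ phi1 x). have h2 := (@dfun_cont _ _ phi2 x).
have c1 : (fun _ : X => t) @ x --> t by apply: cvg_cst.
have c2 : (fun _ : X => 1 - t) @ x --> 1 - t by apply: cvg_cst.
have := cvgD (cvgM c1 h1) (cvgM c2 h2). move=> H. exact: H.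
Qed.
Definition dmix t phi1 phi2 : dual X := Dual (@mix_lin t phi1 phi2) (@mix_cont t phi1 phi2).

Definition aff (a z : X * dual X) : R := a.2 z.1 + z.2 a.1 - a.2 a.1.
Definition fitz (S : set (X * dual X)) (z : X * dual X) : \bar R :=
  ereal_sup [set (aff a z)%:E | a in S].

Lemma psi_le S z : (psiT S z <= c_plus_ind S z)%E.
Proof. by apply: ge_ereal_sup => _ [g [_ [_ Hg]] <-]; exact: Hg. Qed.

Lemma psi_ge S g z : Zconvex g -> Zlsc g ->
  (forall z', (g z' <= c_plus_ind S z')%E) -> (g z <= psiT S z)%E.
Proof. by move=> gc gl gf; apply: ereal_sup_ubound; exists g. Qed.
Arguments psi_ge {S g} z.

Lemma psi_convex S : Zconvex (psiT S).
Proof.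
move=> t z1 z2 z3 a1 a2 Ht Hc H1 H2.
apply: ge_ereal_sup => _ [g [gc [gl gf]] <-].
apply: (gc t z1 z2 z3 a1 a2 Ht Hc).
- exact: le_trans (psi_ge _ gc gl gf) H1.
- exact: le_trans (psi_ge _ gc gl gf) H2.
Qed.

Lemma psi_lsc S : Zlsc (psiT S).
Proof.
move=> r z /= Hz.
have [_ [g [gc [gl gf]] <-] rg] := ereal_sup_gt Hz.
have [A [oA Az [n [w [e [e0 He]]]]]] := gl r z rg.
exists A; split => //; exists n, w, e; split => // y psi Ay Hw.
have := He y psi Ay Hw => /= H.
exact: lt_le_trans H (psi_ge _ gc gl gf).
Qed.

Lemma fitz_convex S : Zconvex (fitz S).
Proof.
move=> t z1 z2 z3 a1 a2 /andP[t0 t1] [e1 e2] H1 H2.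
apply: ge_ereal_sup => _ [a Sa <-]; rewrite lee_fin.
have h1 : aff a z1 <= a1.
  by rewrite -lee_fin; apply: le_trans H1; apply: ereal_sup_ubound; exists a.
have h2 : aff a z2 <= a2.
  by rewrite -lee_fin; apply: le_trans H2; apply: ereal_sup_ubound; exists a.
have t2 : 0 <= 1 - t by lra.
have k1 := ler_wpM2l t0 h1. have k2 := ler_wpM2l t2 h2.
move: k1 k2; rewrite /aff e1 e2 dD !dZ; nra.
Qed.

Lemma fitz_lsc S : Zlsc (fitz S).
Proof.
move=> r z /= Hz.
have [_ [a Sa <-] ra] := ereal_sup_gt Hz.
rewrite lte_fin in ra.
set d := aff a z - r.
have d0 : 0 < d by rewrite /d; lra.
exists [set y | a.2 z.1 - d / 2 < a.2 y]; split.
- have := @open_comp _ _ a.2 [set u | a.2 z.1 - d / 2 < u] _ (@open_gt _ (a.2 z.1 - d / 2)).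
  apply=> y _; exact: (@dfun_cont _ _ a.2).
- rewrite /=; lra.
- exists 1%N, (fun _ => a.1), (d / 2); split; first lra.
  move=> y psi Ay Hw.
  have := Hw ord0; rewrite ltr_norml => /andP[k1 k2].
  rewrite /=; apply: (@lt_le_trans _ _ (aff a (y, psi))%:E).
    rewrite lte_fin /aff /=; move: Ay k1 k2; rewrite /= /d /aff => Ay k1 k2; clear Hw Hz; lra.
  by apply: ereal_sup_ubound; exists a.
Qed.

Lemma fitz_le S (T : set (X * dual X)) : monotone_op S -> T `<=` S ->
  forall z, (fitz S z <= c_plus_ind T z)%E.
Proof.
move=> mS TS z; rewrite /c_plus_ind; case: ifPn => [/set_mem Tz|_]; last exact: leey.
apply: ge_ereal_sup => _ [a Sa <-]; rewrite lee_fin /aff /coupling.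
case: z Tz => x phi Tz; case: a Sa => y psi Sa.
have := mS _ _ _ _ (TS _ Tz) Sa; rewrite !dB /=; lra.
Qed.

Arguments fitz_le {S T}.

Lemma mono_psi S : monotone_op S -> forall z, ((coupling z)%:E <= psiT S z)%E.
Proof.
move=> mS [x0 p0].
case: (pselect (forall a, S a -> 0 <= p0 (x0 - a.1) - a.2 (x0 - a.1))) => [rel|nrel].
- pose S' := S `|` [set (x0, p0)].
  have mS' : monotone_op S'.
    move=> x y phi psi [Hx|Hx] [Hy|Hy].
    + exact: mS.
    + case: Hy => -> ->; have := rel _ Hx; rewrite !dB /=; lra.
    + case: Hx => -> ->; exact: (rel _ Hy).
    + by case: Hx => -> ->; case: Hy => -> ->; rewrite subrr.
  have HH := psi_ge (x0, p0) (@fitz_convex S') (@fitz_lsc S') (fitz_le mS' (@subsetUl _ S [set (x0, p0)])). apply: (le_trans _ HH).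
  apply: le_ereal_sup_tmp; exists (aff (x0, p0) (x0, p0))%:E.
    by exists (x0, p0) => //; right.
  rewrite lee_fin /aff /coupling /=; lra.
- move/existsNP: nrel => [a /not_implyP [Sa Hn]].
  apply: (le_trans _ (psi_ge _ (@fitz_convex S) (@fitz_lsc S) (fitz_le mS (@subset_refl _ S)))).
  apply: le_ereal_sup_tmp; exists (aff a (x0, p0))%:E; first by exists a.
  move/negP: Hn; rewrite -ltNge !dB => Hn.
  rewrite lee_fin /aff /coupling /=; lra.
Qed.

End Aux.

Theorem theorem2p14 (R : realType) (X : tvsType R)
  (Xhaus : hausdorff_space X) (Xnontriv : exists x : X, x != 0)
  (T : set (X * dual X)) (V : set X) (HVD : V `&` dom T !=set0) :
  let TV := restr T V in
  (V_representable V T <-> (in_M TV /\ eq_c_on (psiT TV) V `<=` TV)) /\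
  (V_representable V T <-> (in_M TV /\ eq_c_on (psiT TV) V = TV)) /\
  (V_representable V T <-> V_representative V TV (psiT TV)).
Proof.
move=> TV.
have restrV : restr TV V = TV.
  apply/seteqP; split => z /=; first by case.
  by move=> [Tz Vz].
have TVne : TV !=set0 by case: HVD => x [Vx [phi Tx]]; exists (x, phi).
have i_iii : V_representable V T -> in_M TV /\ eq_c_on (psiT TV) V = TV.
  move=> [_ [h [[hprop hconv hlsc hc] heq]]].
  have hTV : forall z, TV z -> h z = (coupling z)%:E.
    move=> z TVz; have [] : eq_c_on h V z by rewrite heq.
    by [].
  have hf : forall z, (h z <= c_plus_ind TV z)%E.
    move=> z; rewrite /c_plus_ind; case: ifPn => [/set_mem/hTV ->//|_]; exact: leey.
  have hpsi z : (h z <= psiT TV z)%E := @psi_ge R X TV h z hconv hlsc hf.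
  split; first split => //.
    move=> x y phi psi Hx Hy.
    pose x3 := 2^-1 *: x + (1 - 2^-1) *: y.
    pose z3 := (x3, dmix 2^-1 phi psi).
    have t01 : 0 <= (2^-1 : R) <= 1 by apply/andP; split; lra.
    have Hc : Zcomb 2^-1 (x, phi) (y, psi) z3 by split.
    have h1 : (h (x, phi) <= (coupling (x, phi))%:E)%E by rewrite hTV.
    have h2 : (h (y, psi) <= (coupling (y, psi))%:E)%E by rewrite hTV.
    have := hconv _ _ _ _ _ _ t01 Hc h1 h2.
    move=> /(le_trans (hc z3)); rewrite lee_fin /coupling /= /mixf /x3 !dD !dZ !dN.
    lra.
  apply/seteqP; split => z.
    move=> [pz Vz].
    have hz : h z = (coupling z)%:E by apply/le_anti; rewrite hc andbT -pz hpsi.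
    have : eq_c_on h V z by split.
    by rewrite heq.
  move=> TVz; split; last by case: TVz.
  apply/le_anti/andP; split; last exact: le_trans (hc z) (hpsi z).
  by have := psi_le TV z; rewrite /c_plus_ind ifT //; exact: mem_set.
have ii_iv : in_M TV /\ eq_c_on (psiT TV) V `<=` TV -> V_representative V TV (psiT TV).
  move=> [[mono ne] sub].
  have pc z := mono_psi mono z.
  have pTV z : TV z -> psiT TV z = (coupling z)%:E.
    move=> TVz; apply/le_anti; rewrite pc andbT.
    by have := psi_le TV z; rewrite /c_plus_ind ifT //; exact: mem_set.
  split.
    split => //; last exact: psi_lsc; last exact: psi_convex.
    split.
      move=> z; apply/eqP => hz; have := pc z; rewrite hz leeNy_eq.
      by [].
    by case: ne => z TVz; exists z; rewrite pTV.
  rewrite restrV; apply/seteqP; split => // z TVz; split; [exact: pTV | by case: TVz].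
have iv_i : V_representative V TV (psiT TV) -> V_representable V T.
  move=> [hR heq]; split => //; exists (psiT TV); split => //.
  by rewrite heq restrV.
split; last split.
- split; first by move/i_iii => [? ->]; split.
  by move/ii_iv/iv_i.
- split; first exact: i_iii.
  by move=> [? e]; apply/iv_i/ii_iv; rewrite e; split.
- by split; [move/i_iii => [? e]; apply: ii_iv; rewrite e; split | exact: iv_i].
Qed.
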